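(* Fix $k\ge2$ and let $Z^{(1)},\dots,Z^{(k)}$ be independent copies of $Z$. In the $k$-choice model: (1) if $\mathbb{E}\min_{1\le i\le k}Z^{(i)}<\infty$, then $\sup_{n\in\mathbb{N}}|R_n|<\infty$ almost surely; (2) if $\mathbb{E}\min_{1\le i\le k}Z^{(i)}=\infty$, then $\sup_{n\in\mathbb{N}}|R_n|=\infty$ almost surely.
   Context: Let $Z$ be a random variable on $\mathbb{N}=\{1,2,3,\dots\}$. Fix $k\ge2$ and let $(Z^{(1)}_n)_{n\ge1},\dots,(Z^{(k)}_n)_{n\ge1}$ be $k$ independent sequences of i.i.d. random variables, all distributed as $Z$ and mutually independent. The $k$-choice model: define $T_n=\{n\}$ for $n\le0$ and $T_n=\{n\}\cup\bigcup_{i=1}^k T_{n-Z^{(i)}_n}$ for $n\ge1$. Let $\mathcal{L}_n=T_n\cap\{0,-1,-2,\dots\}$ and $R_n=\max\mathcal{L}_n$. *)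

(* Defs.v *)
From HB Require Import structures.
From mathcomp Require Import all_boot all_order all_algebra.
From mathcomp Require Import all_classical all_reals all_analysis.
Set Implicit Arguments. Unset Strict Implicit. Unset Printing Implicit Defensive.
Import Order.TTheory GRing.Theory Num.Theory.
Local Open Scope classical_set_scope.
Local Open Scope ring_scope.

(* z i n stands for Z^{(i+1)}_n (i : 'I_k, n >= 1); values are assumed >= 1.  *)

(* T_m computed with fuel; for m = n >= 1 the fuel n suffices because
   each step strictly decreases the index (all z >= 1).  Returns T_m as a
   list of integers (possibly with repetitions). *)
Fixpoint Tfuel (k : nat) (z : 'I_k -> nat -> nat) (fuel : nat) (m : int)
  : seq int :=
  if m <= 0 then [:: m] else
  match fuel with
  | 0%N => [:: m]
  | f.+1 => m :: flatten [seq Tfuel z f (m - (z i `|m|%N)%:Z) | i <- enum 'I_k]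
  end.

Definition Tset (k : nat) (z : 'I_k -> nat -> nat) (n : nat) : seq int :=
  Tfuel z n n%:Z.

Definition Lset (k : nat) (z : 'I_k -> nat -> nat) (n : nat) : seq int :=
  [seq x <- Tset z n | x <= 0].

(* R_n = max L_n (L_n is nonempty when all z >= 1) *)
Definition Rmax (k : nat) (z : 'I_k -> nat -> nat) (n : nat) : int :=
  let s := Lset z n in foldr Num.max (head 0 s) s.

(* minimum of a k-family of naturals (meaningful for k >= 1) *)
Definition kmin (k : nat) (f : 'I_k -> nat) : nat :=
  let s := [seq f i | i <- enum 'I_k] in foldr minn (head 0%N s) s.

(* product rule for every finite subfamily (of indices satisfying [A]) and
   every choice of values; for discrete random variables this is mutual
   independence. *)
Definition mutually_independent_nat {d : measure_display} {T : measurableType d}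
  {R : realType} (P : probability T R) (I : eqType) (A : pred I)
  (X : I -> T -> nat) : Prop :=
  forall (s : seq I) (v : I -> nat), uniq s -> all A s ->
    fine (P (\bigcap_(i in [set` s]) [set w | X i w = v i])) =
    \prod_(i <- s) fine (P [set w | X i w = v i]).

(* Main.v *)
Require Import Defs.
From HB Require Import structures.
From mathcomp Require Import all_boot all_order all_algebra.
From mathcomp Require Import all_classical all_reals all_analysis.
From mathcomp Require Import zify ring lra.
Import Order.TTheory GRing.Theory Num.Theory.
Local Open Scope classical_set_scope.
Local Open Scope ring_scope.


Lemma foldr_minn_prop (x : nat) s :
  foldr minn x s \in x :: s /\ forall y, y \in x :: s -> (foldr minn x s <= y)%N.
Proof.
elim: s => [|y s [IH1 IH2]] /=; first by split; [rewrite inE|move=> y; rewrite inE => /eqP->].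
split.
  rewrite /minn; case: ifP => _; first by rewrite !inE eqxx orbT.
  by move: IH1; rewrite !inE => /orP[->|->]; rewrite ?orbT.
move=> z; rewrite !inE => /orP[/eqP->|/orP[/eqP->|zs]].
- by rewrite geq_min IH2 ?orbT // mem_head.
- by rewrite geq_min leqnn.
- by rewrite geq_min IH2 ?orbT // inE zs orbT.
Qed.

Lemma kmin_prop k (f : 'I_k -> nat) : (0 < k)%N ->
  (exists i, kmin f = f i) /\ forall i, (kmin f <= f i)%N.
Proof.
move=> k0; rewrite /kmin.
have [x [s' Es]] : exists x s', [seq f i | i <- enum 'I_k] = x :: s'.
  case E: [seq f i | i <- enum 'I_k] => [|x s']; last by exists x, s'.
  by move: (congr1 size E); rewrite size_map size_enum_ord /= => Hk; rewrite Hk in k0.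
rewrite Es /=.
have [H1 H2] := foldr_minn_prop x s'.
have eq : minn x (foldr minn x s') = foldr minn x s'.
  by apply/minn_idPr; apply: H2; rewrite mem_head.
rewrite eq; split.
  by move: H1; rewrite -Es => /mapP[i _ ->]; exists i.
by move=> i; apply: H2; rewrite -Es; apply: map_f; rewrite mem_enum.
Qed.

Lemma foldr_max_prop (h : int) s :
  foldr Num.max h s \in h :: s /\ forall y, y \in h :: s -> y <= foldr Num.max h s.
Proof.
elim: s => [|y s [IH1 IH2]] /=; first by split; [rewrite inE|move=> y; rewrite inE => /eqP->].
split.
  case: (leP y (foldr Num.max h s)) => _; last by rewrite !inE eqxx orbT.
  by move: IH1; rewrite !inE => /orP[->|->]; rewrite ?orbT.
move=> z; rewrite !inE => /orP[/eqP->|/orP[/eqP->|zs]].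
- by rewrite le_max IH2 ?orbT // mem_head.
- by rewrite le_max lexx.
- by rewrite le_max IH2 ?orbT // inE zs orbT.
Qed.

Lemma Rmax_prop k (z : 'I_k -> nat -> nat) n :
  (forall x, x \in Lset z n -> x <= Rmax z n) /\
  (Lset z n != [::] -> Rmax z n \in Lset z n) /\ Rmax z n <= 0.
Proof.
rewrite /Rmax; set s := Lset z n.
have s0 : forall x, x \in s -> x <= 0 by move=> x; rewrite mem_filter => /andP[].
have [H1 H2] := foldr_max_prop (head 0 s) s.
have hs : s != [::] -> head 0 s \in s by case: (s) => // a l _; rewrite mem_head.
split; first by move=> x xs; apply: H2; rewrite inE xs orbT.
split.
  by move=> sn; move: H1; rewrite inE => /orP[/eqP->|//]; apply: hs.
move: H1; rewrite inE => /orP[/eqP->|/s0//].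
by case E: s => [|a l] //=; apply: s0; rewrite E mem_head.
Qed.

Lemma Tfuel_le0 k (z : 'I_k -> nat -> nat) f m : m <= 0 -> Tfuel z f m = [:: m].
Proof. by move=> H; case: f => [|f] /=; rewrite H. Qed.

Lemma Tfuel_pos k (z : 'I_k -> nat -> nat) f (n : nat) : (0 < n)%N ->
  Tfuel z f.+1 n%:Z = n%:Z :: flatten [seq Tfuel z f (n%:Z - (z i n)%:Z) | i <- enum 'I_k].
Proof. by move=> n0 /=; rewrite lez_nat leqNgt n0. Qed.

Lemma reach k (M : nat) (z : 'I_k -> nat -> nat) :
  (0 < k)%N ->
  (forall i m, (0 < m)%N -> (0 < z i m)%N) ->
  (forall m, (0 < m)%N -> (kmin (fun i => z i m) <= m + M)%N) ->
  forall f (n : nat), (0 < n)%N -> (n <= f)%N ->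
  exists2 x, x \in Tfuel z f n%:Z & (- (M%:Z) <= x) && (x <= 0).
Proof.
move=> k0 zpos zmin; elim => [|f IH] n n0 nf; first by rewrite leqn0 in nf; rewrite (eqP nf) in n0.
rewrite Tfuel_pos //.
have [[i Ei] _] := @kmin_prop _ (fun i => z i n) k0.
have := zmin n n0; rewrite Ei => zle.
have zp := zpos i n n0.
case: (leqP n (z i n)) => hc.
  exists (n%:Z - (z i n)%:Z); last by apply/andP; split; lia.
  rewrite inE; apply/orP; right; apply/flatten_mapP; exists i; first by rewrite mem_enum.
  by rewrite Tfuel_le0 ?mem_head //; lia.
have [||x xin xb] := IH (n - z i n)%N; [lia|lia|].
exists x => //; rewrite inE; apply/orP; right; apply/flatten_mapP; exists i; first by rewrite mem_enum.
by have -> : n%:Z - (z i n)%:Z = (n - z i n)%N%:Z by lia.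
Qed.

Lemma kdet1 k (M : nat) (z : 'I_k -> nat -> nat) :
  (0 < k)%N ->
  (forall i m, (0 < m)%N -> (0 < z i m)%N) ->
  (forall m, (0 < m)%N -> (kmin (fun i => z i m) <= m + M)%N) ->
  forall n, (0 < n)%N -> (`|Rmax z n| <= M)%N.
Proof.
move=> k0 zpos zmin n n0.
have [x xin /andP[x1 x2]] := @reach k M z k0 zpos zmin n n n0 (leqnn n).
have xL : x \in Lset z n by rewrite mem_filter x2.
have [H1 [_ H3]] := @Rmax_prop k z n.
have := H1 x xL; move: H3 x1; lia.
Qed.

Lemma kdet2 k (M : nat) (z : 'I_k -> nat -> nat) m :
  (0 < k)%N -> (0 < m)%N -> (forall i, (m + M < z i m)%N) ->
  (M < `|Rmax z m|)%N.
Proof.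
move=> k0 m0 zb.
have child i : Posz m - (z i m)%:Z \in Lset z m.
  rewrite mem_filter /Tset; case: m m0 zb => // m' _ zb.
  rewrite Tfuel_pos // inE; apply/andP; split.
    by have := zb i; lia.
  apply/orP; right; apply/flatten_mapP; exists i; first by rewrite mem_enum.
  by rewrite Tfuel_le0 ?mem_head //; have := zb i; lia.
have allL : forall x, x \in Lset z m -> x < - (M%:Z).
  move=> x; rewrite mem_filter /Tset; case: m m0 zb {child} => // m' _ zb.
  rewrite Tfuel_pos // inE => /andP[x0 /orP[/eqP xe|]]; first by rewrite xe in x0.
  move/flatten_mapP => [i _]; rewrite Tfuel_le0; last by have := zb i; lia.
  by rewrite inE => /eqP ->; have := zb i; lia.
have [_ [H2 _]] := @Rmax_prop k z m.
have ne : Lset z m != [::].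
  by apply/eqP => E; have := child (Ordinal k0); rewrite E.
by have := allL _ (H2 ne); lia.
Qed.


Definition box {T : Type} {J : eqType} (t : seq J) (F : J -> set T) : set T :=
  foldr (fun a E => F a `&` E) setT t.

Lemma boxP {T : Type} {J : eqType} (t : seq J) (F : J -> set T) w :
  box t F w <-> (forall a, a \in t -> F a w).
Proof.
elim: t => [|a t IH] /=; first by split => // _ a; rewrite in_nil.
split.
  by case=> Fa /IH H b; rewrite inE => /orP[/eqP->|/H].
move=> H; split; first by apply: H; rewrite mem_head.
by apply/IH => b bt; apply: H; rewrite inE bt orbT.
Qed.

Lemma box_measurable d {T : measurableType d} {J : eqType} (t : seq J) (F : J -> set T) :
  (forall a, a \in t -> measurable (F a)) -> measurable (box t F).
Proof.
elim: t => [|a t IH] H /=; first exact: measurableT.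
apply: measurableI; first by apply: H; rewrite mem_head.
by apply: IH => b bt; apply: H; rewrite inE bt orbT.
Qed.

Lemma box_eq {T : Type} {J : eqType} (t : seq J) (F G : J -> set T) :
  (forall a, a \in t -> F a = G a) -> box t F = box t G.
Proof.
elim: t => [|a t IH] H //=.
by rewrite H ?mem_head // IH // => b bt; apply: H; rewrite inE bt orbT.
Qed.

Definition Pr {d} {T : measurableType d} {R : realType} (P : probability T R) (E : set T) : R :=
  fine (P E).

Section Prlemmas.
Context d (T : measurableType d) (R : realType) (P : probability T R).

Lemma PrU (E F : set T) : measurable E -> measurable F -> E `&` F = set0 ->
  Pr P (E `|` F) = Pr P E + Pr P F.
Proof.
move=> mE mF EF; rewrite /Pr measureU // fineD //; exact: fin_num_measure.
Qed.

Lemma PrD (E F : set T) : measurable E -> measurable F -> F `<=` E ->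
  Pr P (E `\` F) = Pr P E - Pr P F.
Proof.
move=> mE mF FE; rewrite /Pr measureD //; last by rewrite (le_lt_trans (probability_le1 _ _)) // ltry.
by rewrite setIidr // fineB //; exact: fin_num_measure.
Qed.

Lemma PrT : Pr P setT = 1.
Proof. by rewrite /Pr probability_setT. Qed.

Lemma Pr0 : Pr P set0 = 0.
Proof. by rewrite /Pr measure0. Qed.

Lemma Pr_ge0 E : 0 <= Pr P E.
Proof. by rewrite /Pr fine_ge0. Qed.

Lemma Pr_le1 E : measurable E -> Pr P E <= 1.
Proof.
move=> mE; rewrite /Pr; have := @probability_le1 _ _ _ P E mE.
by rewrite -(fineK (fin_num_measure P E mE)) lee_fin.
Qed.

Lemma PrE E : measurable E -> P E = (Pr P E)%:E.
Proof. by move=> mE; rewrite /Pr fineK //; exact: fin_num_measure. Qed.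

Lemma Pr_le E F : measurable E -> measurable F -> E `<=` F -> Pr P E <= Pr P F.
Proof.
move=> mE mF EF; rewrite /Pr; apply: fine_le; try exact: fin_num_measure.
by apply: le_measure => //; rewrite inE.
Qed.

End Prlemmas.

Lemma prod_bound (R : realType) (p : nat -> R) (s : seq nat) :
  (forall m, 0 <= p m <= 1) ->
  \prod_(m <- s) (1 - p m) * (1 + \sum_(m <- s) p m) <= 1.
Proof.
move=> hp; elim: s => [|x s IH]; first by rewrite !big_nil; lra.
rewrite !big_cons.
have h0 : 0 <= \prod_(m <- s) (1 - p m).
  by apply: prodr_ge0 => i _; have := hp i; lra.
have h1 : 0 <= \sum_(m <- s) p m by apply: sumr_ge0 => i _; have := hp i; lra.
have /andP[px1 px2] := hp x.
have h2 : 0 <= \prod_(m <- s) (1 - p m) * (p x * (p x + \sum_(m <- s) p m)).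
  by apply: mulr_ge0 => //; apply: mulr_ge0 => //; lra.
nra.
Qed.


Section indep.
Context d (T : measurableType d) (R : realType) (P : probability T R).
Context (I : eqType) (A : pred I) (X : I -> T -> nat).
Hypothesis mX : forall a j, A a -> measurable [set w | X a w = j].
Hypothesis indep : mutually_independent_nat P A X.

Definition pt (v : I -> nat) a := [set w | X a w = v a].
Definition ev (b : I -> bool) (c : I -> nat) a :=
  [set w | if b a then (X a w < c a)%N else (c a <= X a w)%N].
Definition ltset a c := [set w | (X a w < c)%N].

Lemma ltset0 a : ltset a 0 = set0.
Proof. by apply/seteqP; split => w //=; rewrite /ltset /= ltn0. Qed.

Lemma ltsetS a c : ltset a c.+1 = ltset a c `|` [set w | X a w = c].
Proof. by apply/seteqP; split => w /=; rewrite /ltset /=; lia. Qed.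

Lemma mlt a c : A a -> measurable (ltset a c).
Proof.
move=> Aa; elim: c => [|c IH]; first by rewrite ltset0.
by rewrite ltsetS; apply: measurableU => //; exact: mX.
Qed.

Lemma evC b c a : b a = false -> ev b c a = ~` ltset a (c a).
Proof.
by move=> Eb; apply/seteqP; split => w /=; rewrite /ev /ltset /= Eb; lia.
Qed.

Lemma evL b c a : b a = true -> ev b c a = ltset a (c a).
Proof. by move=> Eb; rewrite /ev Eb. Qed.

Lemma mev b c a : A a -> measurable (ev b c a).
Proof.
move=> Aa; case Eb: (b a); first by rewrite evL //; exact: mlt.
by rewrite evC //; apply: measurableC; exact: mlt.
Qed.

Lemma bigcap_box (t : seq I) (F : I -> set T) :
  \bigcap_(i in [set` t]) F i = box t F.
Proof.
apply/seteqP; split => w.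
  by move=> H; apply/boxP => a ta; apply: H.
by move/boxP => H a ta; apply: H.
Qed.

Lemma box_indep s : forall t v b c, uniq (s ++ t) -> all A (s ++ t) ->
  Pr P (box t (pt v) `&` box s (ev b c)) =
  \prod_(a <- t) Pr P (pt v a) * \prod_(a <- s) Pr P (ev b c a).
Proof.
elim: s => [|a s IH] t v b c.
  rewrite cat0s => ut At; rewrite /= setIT big_nil mulr1 -bigcap_box.
  exact: indep.
rewrite /= => /andP[aN u] /andP[Aa As].
rewrite mem_cat negb_or in aN; case/andP: aN => aNs aNt.
rewrite all_cat in As; case/andP: As => As At.
have mBt : measurable (box t (pt v)).
  by apply: box_measurable => x xt; apply: mX; exact: (allP At).
have mBs : measurable (box s (ev b c)).
  by apply: box_measurable => x xs; apply: mev; exact: (allP As).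
pose K := \prod_(a <- t) Pr P (pt v a) * \prod_(a <- s) Pr P (ev b c a).
have fin : forall c', Pr P (box t (pt v) `&` (ltset a c' `&` box s (ev b c))) =
                      K * Pr P (ltset a c').
  elim => [|c' IHc]; first by rewrite ltset0 set0I setI0 Pr0 mulr0.
  pose v' := fun x => if x == a then c' else v x.
  have E0 : box (a :: t) (pt v') = [set w | X a w = c'] `&` box t (pt v).
    rewrite /= /pt /v' eqxx; congr (_ `&` _); apply: box_eq => x xt.
    by have -> : (x == a) = false by apply/eqP => xa; rewrite -xa xt in aNt.
  have E1 : box t (pt v) `&` (ltset a c'.+1 `&` box s (ev b c)) =
     (box t (pt v) `&` (ltset a c' `&` box s (ev b c))) `|`
     (box (a :: t) (pt v') `&` box s (ev b c)).
    rewrite E0 ltsetS; apply/seteqP; split => w /=.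
      by move=> [H1 [[H2|H2] H3]]; [left|right].
    by move=> [[H1 [H2 H3]]|[[H2 H1] H3]]; split => //; split => //; [left|right].
  have mXa : measurable [set w | X a w = c'] by exact: mX.
  rewrite E1 PrU //; first last.
  - rewrite E0; apply/seteqP; split => w //=.
    by move=> [[_ [H1 _]] [[H2 _] _]]; move: H1; rewrite /ltset /= H2 ltnn.
  - by apply: measurableI => //; rewrite E0; exact: measurableI.
  - by apply: measurableI => //; apply: measurableI => //; exact: mlt.
  rewrite IHc (IH (a :: t) v' b c); first last.
  - by rewrite all_cat /= Aa As At.
  - rewrite cat_uniq /= aNt; rewrite cat_uniq in u; case/and3P: u => -> H ->.
    by rewrite negb_or aNs H.
  rewrite big_cons.
  have -> : \prod_(x <- t) Pr P (pt v' x) = \prod_(x <- t) Pr P (pt v x).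
    apply: eq_big_seq => x xt; rewrite /pt /v'.
    by have -> : (x == a) = false by apply/eqP => xa; rewrite -xa xt in aNt.
  rewrite ltsetS PrU //; last first.
    apply/seteqP; split => w //=; rewrite /ltset /= => -[H1 H2]; lia.
  all: try exact: mlt.
  rewrite /pt /v' eqxx /K; ring.
case Eb: (b a).
  by rewrite big_cons evL // fin /K; ring.
rewrite big_cons evC //.
have E2 : box t (pt v) `&` (~` ltset a (c a) `&` box s (ev b c)) =
   (box t (pt v) `&` box s (ev b c)) `\`
   (box t (pt v) `&` (ltset a (c a) `&` box s (ev b c))).
  apply/seteqP; split => w /=.
    by move=> [H1 [H2 H3]]; split => // -[_ [H4 _]].
  move=> [[H1 H3] H4]; split => //; split => // H2; apply: H4; by [].
have mL := @mlt a (c a) Aa.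
rewrite E2 PrD //; first last.
- by move=> w [H1 [H2 H3]].
- by apply: measurableI => //; exact: measurableI.
- exact: measurableI.
rewrite fin (IH t v b c) //; last by rewrite all_cat As At.
rewrite -setTD PrD //.
by rewrite PrT /K; ring.
Qed.

Lemma box_prod s b c : uniq s -> all A s ->
  Pr P (box s (ev b c)) = \prod_(a <- s) Pr P (ev b c a).
Proof.
move=> u As; have := @box_indep s [::] (fun _ => 0%N) b c.
by rewrite cats0 /= setTI big_nil mul1r; apply.
Qed.

End indep.


Section main.
Context d (T : measurableType d) (R : realType) (P : probability T R) (k : nat)
  (Z : 'I_k -> nat -> T -> nat).
Hypothesis k0 : (0 < k)%N.
Hypothesis mZ : forall i n j, (0 < n)%N -> measurable [set w | Z i n w = j].
Hypothesis dZ : forall i i' n n' j, (0 < n)%N -> (0 < n')%N ->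
     P [set w | Z i n w = j] = P [set w | Z i' n' w = j].
Hypothesis iZ : mutually_independent_nat P (fun p : 'I_k * nat => (0 < p.2)%N)
    (fun p w => Z p.1 p.2 w).

Let I : eqType := ('I_k * nat)%type.
Let A : pred I := fun p => (0 < p.2)%N.
Let X : I -> T -> nat := fun p w => Z p.1 p.2 w.
Let mX : forall a j, A a -> measurable [set w | X a w = j].
Proof. by move=> [i n] j; apply: mZ. Qed.

Definition W m w := kmin (fun i => Z i m w).
Definition geW m c := [set w | (c <= W m w)%N].
Definition ltW m c := [set w | (W m w < c)%N].
Definition blk m : seq I := [seq (i, m) | i <- enum 'I_k].
Let ff : I -> bool := fun _ => false.
Let cst (c : nat) : I -> nat := fun _ => c.

Lemma mem_blk m a : (a \in blk m) = (a.2 == m).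
Proof.
case: a => i n /=; apply/idP/idP.
  by case/mapP => j _ [_ ->].
by move/eqP->; apply: map_f; rewrite mem_enum.
Qed.

Lemma uniq_blk m : uniq (blk m).
Proof. by rewrite map_inj_uniq ?enum_uniq // => i j []. Qed.

Lemma geW_box m c : geW m c = box (blk m) (ev d T I X ff (cst c)).
Proof.
apply/seteqP; split => w /=.
- move=> cW; apply/boxP => a; rewrite mem_blk => /eqP am.
  rewrite /ev /ff /cst /X /=; rewrite -am in cW.
  have [_ H] := @kmin_prop k (fun i => Z i a.2 w) k0.
  exact: leq_trans cW (H a.1).
- move/boxP => H; rewrite /geW /W /=.
  have [[i Ei'] _] := @kmin_prop k (fun i => Z i m w) k0.
  rewrite Ei'; have := H (i, m); rewrite mem_blk eqxx => /(_ isT).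
  by rewrite /ev /ff /cst /X /=.
Qed.

Lemma ltW_geW m c : ltW m c = ~` geW m c.
Proof. by apply/seteqP; split => w /=; rewrite /ltW /geW /=; lia. Qed.

Lemma mgeW m c : (0 < m)%N -> measurable (geW m c).
Proof.
move=> m0; rewrite geW_box; apply: box_measurable => a.
rewrite mem_blk => /eqP am; apply: (@mev d T I A X mX); rewrite /A am.
exact: m0.
Qed.

Lemma mltW m c : (0 < m)%N -> measurable (ltW m c).
Proof. by move=> m0; rewrite ltW_geW; apply: measurableC; exact: mgeW. Qed.

Lemma Pr_lt_same i i' n n' c : (0 < n)%N -> (0 < n')%N ->
  Pr P [set w | (Z i n w < c)%N] = Pr P [set w | (Z i' n' w < c)%N].
Proof.
move=> n0 n'0; elim: c => [|c IH].
  have E j m : [set w | (Z j m w < 0)%N] = set0.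
    by apply/seteqP; split => w //=; rewrite ltn0.
  by rewrite !E.
have E j m : [set w | (Z j m w < c.+1)%N] =
    [set w | (Z j m w < c)%N] `|` [set w | Z j m w = c].
  by apply/seteqP; split => w /=; lia.
have ml j m : (0 < m)%N -> measurable [set w | (Z j m w < c)%N].
  by move=> m0; have := @mlt d T I A X mX (j, m) c m0.
rewrite !E !PrU //; try exact: ml; try exact: mZ.
- by rewrite IH /Pr (dZ i i' n n' c n0 n'0).
- by apply/seteqP; split => w //= [] /[swap] ->; rewrite ltnn.
- by apply/seteqP; split => w //= [] /[swap] ->; rewrite ltnn.
Qed.

Definition q c := Pr P (geW 1 c).

Lemma Pr_geW m c : (0 < m)%N -> Pr P (geW m c) = q c.
Proof.
move=> m0; rewrite /q !geW_box !(@box_prod d T R P I A X mX iZ) ?uniq_blk //; first last.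
- by apply/allP => a; rewrite mem_blk => /eqP am; rewrite /A /= am.
- by apply/allP => a; rewrite mem_blk => /eqP am; rewrite /A /= am.
rewrite !big_map; apply: eq_bigr => i _.
have E j n : ev d T I X ff (cst c) (j, n) = ~` [set w | (Z j n w < c)%N].
  by apply/seteqP; split => w /=; rewrite /ev /ff /cst /X /=; lia.
have ml j n : (0 < n)%N -> measurable [set w | (Z j n w < c)%N].
  by move=> n0; have := @mlt d T I A X mX (j, n) c n0.
rewrite !E -!setTD !PrD //; try exact: ml.
by rewrite (@Pr_lt_same i i m 1).
Qed.

Lemma box_cat {U : Type} {J : eqType} (s t : seq J) (F : J -> set U) :
  box (s ++ t) F = box s F `&` box t F.
Proof. by elim: s => [|a s IH] /=; rewrite ?setTI // IH setIA. Qed.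

Lemma L2 ms : forall (t : seq I) (b : I -> bool) (c : I -> nat) (cc : nat -> nat),
  uniq ms -> all (fun m => 0 < m)%N ms -> uniq t -> all A t ->
  all (fun a : I => a.2 \notin ms) t ->
  Pr P (box ms (fun m => ltW m (cc m)) `&` box t (ev d T I X b c)) =
  \prod_(m <- ms) (1 - q (cc m)) * \prod_(a <- t) Pr P (ev d T I X b c a).
Proof.
elim: ms => [|m ms IH] t b c cc.
  move=> _ _ ut At _; rewrite /= setTI big_nil mul1r.
  exact: (@box_prod d T R P I A X mX iZ).
move=> /= /andP[mN u] /andP[m0 ms0] ut At tN.
pose b' := fun a : I => if a.2 == m then false else b a.
pose c' := fun a : I => if a.2 == m then cc m else c a.
have tN' : forall a, a \in t -> (a.2 != m) && (a.2 \notin ms).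
  by move=> a ta; have := allP tN a ta; rewrite inE negb_or.
have evt : forall a, a \in t -> ev d T I X b' c' a = ev d T I X b c a.
  move=> a ta; case/andP: (tN' a ta) => am _.
  by rewrite /ev /b' /c' (negbTE am).
have evb : forall a, a \in blk m -> ev d T I X b' c' a = ev d T I X ff (cst (cc m)) a.
  by move=> a; rewrite mem_blk => /eqP am; rewrite /ev /b' /c' /ff /cst am eqxx.
have Et : box t (ev d T I X b' c') = box t (ev d T I X b c) by apply: box_eq.
have Eblk : box (blk m) (ev d T I X b' c') = geW m (cc m).
  by rewrite geW_box; apply: box_eq.
have mBms : measurable (box ms (fun m => ltW m (cc m))).
  by apply: box_measurable => x xms; apply: mltW; exact: (allP ms0).
have mBt : measurable (box t (ev d T I X b c)).
  by apply: box_measurable => x xt; apply: (@mev d T I A X mX); exact: (allP At).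
have mG : measurable (geW m (cc m)) by exact: mgeW.
set L := box ms _; set Bt := box t _.
have E : (ltW m (cc m) `&` L) `&` Bt = (L `&` Bt) `\` (L `&` (geW m (cc m) `&` Bt)).
  rewrite ltW_geW; apply/seteqP; split => w /=.
    by move=> [[H1 H2] H3]; split => // -[_ [H4 _]].
  by move=> [[H1 H3] H4]; split => //; split => // H2; apply: H4.
rewrite E PrD //; first last.
- by move=> w [H1 [_ H3]].
- by apply: measurableI => //; exact: measurableI.
- exact: measurableI.
rewrite (IH t b c cc) //; last first.
  by apply/allP => a ta; case/andP: (tN' a ta).
rewrite -Eblk /Bt -Et -box_cat (IH (blk m ++ t) b' c' cc) //; first last.
- apply/allP => a; rewrite mem_cat => /orP[|ta]; last by case/andP: (tN' a ta).
  by rewrite mem_blk => /eqP ->.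
- rewrite all_cat At andbT; apply/allP => a; rewrite mem_blk => /eqP am.
  by rewrite /A /= am.
- rewrite cat_uniq uniq_blk ut andbT /=; apply/hasPn => a ta.
  by rewrite mem_blk; case/andP: (tN' a ta).
rewrite big_cat /= big_cons.
have -> : \prod_(i <- blk m) Pr P (ev d T I X b' c' i) =
    \prod_(i <- blk m) Pr P (ev d T I X ff (cst (cc m)) i).
  by apply: eq_big_seq => a ab; rewrite evb.
have -> : \prod_(i <- t) Pr P (ev d T I X b' c' i) =
    \prod_(i <- t) Pr P (ev d T I X b c i).
  by apply: eq_big_seq => a ab; rewrite evt.
have -> : \prod_(i <- blk m) Pr P (ev d T I X ff (cst (cc m)) i) = q (cc m).
  rewrite -(@Pr_geW m (cc m) m0) geW_box (@box_prod d T R P I A X mX iZ) ?uniq_blk //.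
  by apply/allP => a; rewrite mem_blk => /eqP am; rewrite /A /= am.
ring.
Qed.

Lemma q_ge0 c : 0 <= q c.
Proof. exact: Pr_ge0. Qed.

Lemma q_le1 c : q c <= 1.
Proof. exact/Pr_le1/mgeW. Qed.

Lemma IntE : (\int[P]_w ((W 1 w)%:R : R)%:E)%E = (\sum_(x <oo) (q x.+1)%:E)%E.
Proof.
have pw : forall w, ((W 1 w)%:R : R)%:E =
    (\sum_(x <oo) (\1_(geW 1 x.+1) w : R)%:E)%E.
  move=> w; rewrite (@nneseries_split R _ 0 (W 1 w)); last first.
    by move=> j _; rewrite lee_fin indicE ler0n.
  rewrite eseries0 ?adde0; last first.
    move=> i hi _; rewrite indicE memNset //= /geW /=; lia.
  rewrite add0n sumEFin; congr EFin.
  have -> : \sum_(0 <= i < W 1 w) (\1_(geW 1 i.+1) w : R) = \sum_(0 <= i < W 1 w) (1 : R).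
    by apply: eq_big_nat => i /andP[_ hi]; rewrite indicE mem_set //= /geW /=.
  by rewrite sumr_const_nat subn0.
under eq_integral do rewrite pw.
rewrite integral_nneseries //; last first.
  move=> n; apply/measurable_realfun.measurable_EFinP; apply: measurable_realfun.measurable_indic; exact: mgeW.
apply: eq_eseriesr => n _.
rewrite integral_indic //; last exact: mgeW.
rewrite setIT /q /Pr fineK //; apply: fin_num_measure; exact: mgeW.
Qed.

Lemma part1 :
  (\int[P]_w ((kmin (fun i => Z i 1%N w))%:R : R)%:E < +oo)%E ->
  (forall i n w, (0 < n)%N -> (0 < Z i n w)%N) ->
  {ae P, forall w, exists M : nat,
        forall n, (0 < n)%N -> (`|Rmax (fun i m => Z i m w) n| <= M)%N}.
Proof.
move=> hint zpos.
have hs : (\sum_(x <oo) (q x.+1)%:E < +oo)%E by rewrite -IntE.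
pose F j := geW j.+1 j.+2.
have mF j : measurable (F j) by exact: (@mgeW j.+1 j.+2 isT).
have hF : P (lim_sup_set F) = 0%E.
  apply: lim_sup_set_cvg0 => //; apply: le_lt_trans hs.
  apply: lee_nneseries => j; first by move=> _ _; exact: measure_ge0.
  move=> _; apply: (@le_trans _ _ (Pr P (F j))%:E).
    by rewrite le_eqVlt; apply/orP; left; apply/eqP; exact: PrE.
  rewrite lee_fin /F Pr_geW //.
  rewrite /q; apply: Pr_le; try exact: mgeW.
  by move=> w; rewrite /geW /=; lia.
rewrite /prop_near1 /nbhs /= /almost_everywhere.
exists (lim_sup_set F); split.
- apply: bigcapT_measurable => n; apply: bigcup_measurable => j _; exact: mF.
- exact: hF.
move=> w /= Hw; apply: contra_notP Hw => Hls.
have [n Hn] : exists n, forall j, (n <= j)%N -> ~ F j w.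
  apply: contra_notP Hls => H1 m _.
  case: (pselect ((\bigcup_(j in [set j | (m <= j)%N]) F j) w)) => // H2.
  by exfalso; apply: H1; exists m => j mj Fj; apply: H2; exists j.
pose M := \max_(i < n.+1) W i w.
exists M => n' n'0; apply: (@kdet1 k M (fun i m => Z i m w) k0 _ _ n' n'0).
  by move=> i m m0; exact: zpos.
move=> m m0; change (W m w <= m + M)%N.
case: (leqP m n) => hm.
  have hm' : (m < n.+1)%N by rewrite ltnS.
  have := @leq_bigmax _ (fun i : 'I_n.+1 => W i w) (Ordinal hm').
  rewrite -/M /=; lia.
have := Hn m.-1; rewrite /F /geW /= prednK //.
move=> H; have hmn : (n <= m.-1)%N by lia.
have := H hmn; lia.
Qed.

Lemma part2 :
  (\int[P]_w ((kmin (fun i => Z i 1%N w))%:R : R)%:E = +oo)%E ->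
  (forall i n w, (0 < n)%N -> (0 < Z i n w)%N) ->
  {ae P, forall w, forall M : nat,
        exists n, (0 < n)%N /\ (M < `|Rmax (fun i m => Z i m w) n|)%N}.
Proof.
move=> hint zpos.
have hs : (\sum_(x <oo) (q x.+1)%:E = +oo)%E by rewrite -IntE.
pose Asum n := \sum_(0 <= x < n) q x.+1.
have unb : forall K : R, exists n, K < Asum n.
  move=> K; case: (pselect (exists n, K < Asum n)) => // H; exfalso.
  have : (\sum_(x <oo) (q x.+1)%:E <= K%:E)%E.
    apply: lime_le; first by apply: is_cvg_nneseries => *; rewrite lee_fin q_ge0.
    apply: nearW => n; rewrite sumEFin lee_fin leNgt; apply/negP => h; apply: H.
    by exists n.
  by rewrite hs leNgt ltry.
have Amono n j : Asum n <= Asum (n + j)%N.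
  elim: j => [|j IH]; first by rewrite addn0.
  rewrite addnS /Asum big_nat_recr //= ; rewrite /Asum in IH; have := q_ge0 (n + j).+1; lra.
have Abound n : Asum n <= n%:R.
  elim: n => [|n IH]; first by rewrite /Asum big_geq.
  by rewrite /Asum big_nat_recr //= -/(Asum _) -natr1; have := q_le1 n.+1; lra.
pose S N M := \sum_(1 <= m < N.+1) q (m + M + 1)%N.
have Sbound N M : Asum (N + M + 1)%N <= (M + 1)%N%:R + S N M.
  elim: N => [|N IH].
    by rewrite /S big_geq // addr0 add0n; exact: Abound.
  have -> : (N.+1 + M + 1 = (N + M + 1).+1)%N by lia.
  rewrite /Asum big_nat_recr //= -/(Asum _) /S big_nat_recr //= -/(S N M).
  have -> : ((N + M + 1).+1 = N.+1 + M + 1)%N by lia.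
  lra.
have negG : forall M, P.-negligible (\bigcap_N box (index_iota 1 N.+1)
                                      (fun m => ltW m (m + M + 1)%N)).
  move=> M; set G := \bigcap_N _.
  have mD N : measurable (box (index_iota 1 N.+1) (fun m => ltW m (m + M + 1)%N)).
    apply: box_measurable => m; rewrite mem_index_iota => /andP[m1 _].
    exact: mltW.
  have mG : measurable G by apply: bigcapT_measurable => N; exact: mD.
  have PrD N : Pr P (box (index_iota 1 N.+1) (fun m => ltW m (m + M + 1)%N)) =
      \prod_(m <- index_iota 1 N.+1) (1 - q (m + M + 1)%N).
    have := @L2 (index_iota 1 N.+1) [::] (fun _ => false) (fun _ => 0%N)
      (fun m => m + M + 1)%N.
    rewrite /= setIT big_nil mulr1; apply => //; first exact: iota_uniq.
    by apply/allP => m; rewrite mem_index_iota; lia.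
  have bnd N : Pr P G * (1 + S N M) <= 1.
    apply: le_trans (_ : Pr P (box (index_iota 1 N.+1) (fun m => ltW m (m + M + 1)%N))
                      * (1 + S N M) <= 1).
      apply: ler_wpM2r.
        have : 0 <= S N M by apply: sumr_ge0 => i _; exact: q_ge0.
        lra.
      by apply: Pr_le => // w HG; apply: HG.
    rewrite PrD /S; apply: (@prod_bound R (fun m => q (m + M + 1)%N)) => m.
    by rewrite q_ge0 q_le1.
  have hG0 : Pr P G = 0.
    have pg0 := @Pr_ge0 _ _ _ P G.
    case: (eqVneq (Pr P G) 0) => // hne.
    have pos : 0 < Pr P G by rewrite lt_def hne pg0.
    have [n hn] := unb ((M + 1)%N%:R + (Pr P G)^-1).
    have h1 := Amono n (M + 1)%N; rewrite addnA in h1.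
    have h2 := Sbound n M.
    have h3 := bnd n.
    have h4 : Pr P G * (Pr P G)^-1 = 1 by rewrite mulfV.
    have h5 : (Pr P G)^-1 < S n M by lra.
    have h6 : Pr P G * (Pr P G)^-1 < Pr P G * S n M by rewrite ltr_pM2l.
    lra.
  apply/negligibleP => //; transitivity ((Pr P G)%:E); first exact: PrE.
  by rewrite hG0.
apply: (negligibleS _ (negligible_bigcup negG)).
move=> w /= Hw.
have [M HM] : exists M : nat, ~ exists n, (0 < n)%N /\ (M < `|Rmax (fun i m => Z i m w) n|)%N.
  apply: contra_notP Hw => H M.
  case: (pselect (exists n, (0 < n)%N /\ (M < `|Rmax (fun i m => Z i m w) n|)%N)) => // H'.
  by exfalso; apply: H; exists M.
exists M => // N _; apply/boxP => m; rewrite mem_index_iota => /andP[m1 _].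
rewrite /ltW /= ltnNge; apply/negP => hW; apply: HM; exists m; split => //.
apply: (@kdet2 k M (fun i m => Z i m w) m k0 m1) => i.
have [_ Hle] := @kmin_prop k (fun i => Z i m w) k0.
have := Hle i; move: hW; rewrite /W; lia.
Qed.

End main.

Theorem mainTheorem16 (d : measure_display) (T : measurableType d)
  (R : realType) (P : probability T R) (k : nat)
  (Z : 'I_k -> nat -> T -> nat) :
  (2 <= k)%N ->
  (* Z i n (i : 'I_k, n >= 1) plays the role of Z^{(i+1)}_n; values in {1,2,...} *)
  (forall i n w, (0 < n)%N -> (0 < Z i n w)%N) ->
  (forall i n j, (0 < n)%N -> measurable [set w | Z i n w = j]) ->
  (* all Z^{(i)}_n have the same distribution (that of Z) *)
  (forall i i' n n' j, (0 < n)%N -> (0 < n')%N ->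
     P [set w | Z i n w = j] = P [set w | Z i' n' w = j]) ->
  (* the whole family (Z^{(i)}_n)_{i, n >= 1} is mutually independent *)
  mutually_independent_nat P (fun p : 'I_k * nat => (0 < p.2)%N)
    (fun p w => Z p.1 p.2 w) ->
  (* (1) E min_i Z^{(i)} < oo  ==>  sup_n |R_n| < oo a.s. *)
  ((\int[P]_w ((kmin (fun i => Z i 1%N w))%:R : R)%:E < +oo)%E ->
     {ae P, forall w, exists M : nat,
        forall n, (0 < n)%N -> (`|Rmax (fun i m => Z i m w) n| <= M)%N}) /\
  (* (2) E min_i Z^{(i)} = oo  ==>  sup_n |R_n| = oo a.s. *)
  ((\int[P]_w ((kmin (fun i => Z i 1%N w))%:R : R)%:E = +oo)%E ->
     {ae P, forall w, forall M : nat,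
        exists n, (0 < n)%N /\ (M < `|Rmax (fun i m => Z i m w) n|)%N}).
Proof.
Proof.
move=> k2 zpos mZ dZ iZ.
have k0 : (0 < k)%N by apply: leq_trans k2.
split.
- by move=> hint; apply: (@part1 d T R P k Z k0 mZ dZ iZ hint zpos).
- by move=> hint; apply: (@part2 d T R P k Z k0 mZ dZ iZ hint zpos).
Qed.
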